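(* If $A\subseteq\mathbb{R}$ is homogeneous, then $A$ is not order-isomorphic to its complement $\mathbb{R}\setminus A$. Equivalently, if $A\subseteq \mathbb{R}$ is order-isomorphic to $\mathbb{R}\setminus A$, then there is an open interval $I$ such that $A\not\cong A\cap I$.
   Context: A suborder $A\subseteq\mathbb{R}$ is homogeneous if $A\cong A\cap I$ (order-isomorphism) for every open interval $I=(a,b)$ with $-\infty\le a<b\le\infty$. *)

(* Defs.v *)
From Stdlib Require Import Reals.
Open Scope R_scope.

(* A suborder of R is a predicate A : R -> Prop, ordered by the order of R. *)

(* A and B are order-isomorphic: there is a map f from A onto B which is
   strictly increasing (hence an order isomorphism: bijective, order
   preserving and reflecting). *)
Definition order_iso (A B : R -> Prop) : Prop :=
  exists f : R -> R,
    (forall x, A x -> B (f x)) /\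
    (forall x y, A x -> A y -> x < y -> f x < f y) /\
    (forall y, B y -> exists x, A x /\ f x = y).

(* Open interval (a,b) with -oo <= a < b <= +oo; None encodes -oo (for a)
   or +oo (for b). *)
Definition lower_ok (a : option R) (x : R) : Prop :=
  match a with None => True | Some a => a < x end.
Definition upper_ok (b : option R) (x : R) : Prop :=
  match b with None => True | Some b => x < b end.
Definition ends_lt (a b : option R) : Prop :=
  match a, b with Some a, Some b => a < b | _, _ => True end.
Definition open_interval (a b : option R) (x : R) : Prop :=
  lower_ok a x /\ upper_ok b x.

Definition homogeneous (A : R -> Prop) : Prop :=
  forall a b : option R, ends_lt a b ->
    order_iso A (fun x => A x /\ open_interval a b x).

Definition complement (A : R -> Prop) : R -> Prop := fun x => ~ A x.

(* Main.v *)
Require Import Defs.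
From Stdlib Require Import Reals Lra Classical ClassicalEpsilon.
Open Scope R_scope.

Definition dense (D : R -> Prop) := forall u v, u < v -> exists d, D d /\ u < d /\ d < v.

Definition ext (D : R -> Prop) (h : R -> R) (x : R) : R :=
  epsilon (inhabits 0) (is_lub (fun y => exists a, D a /\ a <= x /\ y = h a)).

Section Ext.
Variable D : R -> Prop.
Variable h : R -> R.
Hypothesis Dd : dense D.
Hypothesis hinc : forall x y, D x -> D y -> x < y -> h x < h y.

Lemma hle : forall x y, D x -> D y -> x <= y -> h x <= h y.
Proof. intros x y Hx Hy [H|H]. left; auto. subst; lra. Qed.

Lemma ext_lub x : is_lub (fun y => exists a, D a /\ a <= x /\ y = h a) (ext D h x).
Proof.
  unfold ext. apply epsilon_spec.
  destruct (completeness (fun y => exists a, D a /\ a <= x /\ y = h a)) as [m Hm].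
  - destruct (Dd x (x+1)) as [d [Hd [H1 H2]]]; try lra.
    exists (h d). intros y [a [Ha [Hax ->]]]. apply hle; auto; lra.
  - destruct (Dd (x-1) x) as [d [Hd [H1 H2]]]; try lra.
    exists (h d), d. repeat split; auto; lra.
  - exists m; exact Hm.
Qed.

Lemma ext_ge x d : D d -> d <= x -> h d <= ext D h x.
Proof. intros. apply (proj1 (ext_lub x)). exists d; auto. Qed.

Lemma ext_le x d : D d -> x < d -> ext D h x <= h d.
Proof. intros. apply (proj2 (ext_lub x)). intros y [a [Ha [Hax ->]]].
  apply hle; auto; lra. Qed.

Lemma ext_mono x y : x <= y -> ext D h x <= ext D h y.
Proof. intros. apply (proj2 (ext_lub x)). intros z [a [Ha [Hax ->]]].
  apply ext_ge; auto; lra. Qed.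

Lemma ext_in x : D x -> ext D h x = h x.
Proof. intros Hx. apply Rle_antisym.
  - apply (proj2 (ext_lub x)). intros z [a [Ha [Hax ->]]]. apply hle; auto.
  - apply ext_ge; auto; lra.
Qed.

Lemma ext_out x a0 : ~ D x -> D a0 -> ext D h x <> h a0.
Proof.
  intros Hx Ha0 E.
  destruct (Rtotal_order a0 x) as [H|[H|H]].
  - destruct (Dd a0 x H) as [a1 [Ha1 [H1 H2]]].
    pose proof (ext_ge x a1 Ha1 ltac:(lra)). pose proof (hinc a0 a1 Ha0 Ha1 H1). lra.
  - subst; contradiction.
  - destruct (Dd x a0 H) as [a2 [Ha2 [H1 H2]]].
    pose proof (ext_le x a2 Ha2 H1). pose proof (hinc a2 a0 Ha2 Ha0 H2). lra.
Qed.
End Ext.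

Theorem mainTheorem12 (A : R -> Prop) :
  homogeneous A -> ~ order_iso A (complement A).
Proof.
  intros Hom [g [gB [ginc gsur]]].
  assert (Ane : exists a, A a).
  { destruct (classic (exists a, A a)) as [H|H]; auto.
    destruct (gsur 0) as [x [Hx _]]. intro. apply H; eauto. exfalso; apply H; eauto. }
  destruct Ane as [a0 Ha0].
  assert (Dd : dense A).
  { intros u v Huv. destruct (Hom (Some u) (Some v) Huv) as [k [kB _]].
    destruct (kB a0 Ha0) as [H1 [H2 H3]]. exists (k a0); simpl in *; auto. }
  destruct (Hom (Some 0) (Some 1) ltac:(simpl; lra)) as [f [fB [finc fsur]]].
  set (K := ext A g). set (F := ext A f).
  set (phi := fun x => F (K x)).
  assert (Fb : forall x, 0 < F x < 1).
  { intro x. destruct (Dd (x-1) x) as [d [Hd _]]; try lra.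
    destruct (Dd x (x+1)) as [e [He _]]; try lra.
    destruct (Dd (x-1) x) as [d' [Hd' [? ?]]]; try lra.
    destruct (Dd x (x+1)) as [e' [He' [? ?]]]; try lra.
    pose proof (ext_ge A f Dd finc x d' Hd' ltac:(lra)).
    pose proof (ext_le A f Dd finc x e' He' ltac:(lra)).
    destruct (fB d' Hd') as [_ [G1 _]]. destruct (fB e' He') as [_ [_ G2]].
    simpl in *. unfold F; lra. }
  assert (Fin : forall x, A x -> A (F x)).
  { intros x Hx. unfold F. rewrite ext_in; auto. apply (fB x Hx). }
  assert (Fout : forall x, ~ A x -> ~ A (F x)).
  { intros x Hx HF. destruct (fsur (F x)) as [a [Ha E]].
    split; auto. split; simpl; apply Fb.
    apply (ext_out A f Dd finc x a Hx Ha). symmetry in E. exact E. }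
  assert (Kin : forall x, A x -> ~ A (K x)).
  { intros x Hx. unfold K. rewrite ext_in; auto. apply (gB x Hx). }
  assert (Kout : forall x, ~ A x -> A (K x)).
  { intros x Hx. apply NNPP. intro HK. destruct (gsur (K x) HK) as [a [Ha E]].
    apply (ext_out A g Dd ginc x a Hx Ha). symmetry; exact E. }
  assert (mono : forall x y, x <= y -> phi x <= phi y).
  { intros. unfold phi, F, K. apply ext_mono; auto. apply ext_mono; auto. }
  set (S := fun x => x <= phi x).
  destruct (completeness S) as [c [Hub Hl]].
  - exists 1. intros x Hx. unfold S in Hx. pose proof (Fb (K x)). unfold phi in Hx. lra.
  - exists 0. unfold S, phi. pose proof (Fb (K 0)). lra.
  - assert (H1 : c <= phi c).
    { apply Hl. intros x Hx. unfold S in Hx.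
      pose proof (mono x c (Hub x Hx)). lra. }
    assert (H2 : phi c <= c).
    { apply Hub. unfold S. apply mono; auto. }
    assert (E : phi c = c) by lra.
    destruct (classic (A c)) as [Hc|Hc].
    + apply (Fout _ (Kin c Hc)). fold (phi c). rewrite E; auto.
    + apply Hc. rewrite <- E. apply Fin, Kout; auto.
Qed.
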